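(* Let $(X,d,\mu)$ be a coarse median space with parameters $\rho,H$. Then for every $n\geqslant1$ there exists a constant $C_n$ depending on $\rho,H$ (and $n$) such that for all $a,b,e_1,\ldots,e_{n+1}\in X$, $$\mu\big(a,e_{n+1},\mu(e_1,\ldots,e_n;b)\big)\sim_{C_n}\mu\big(\mu(a,e_{n+1},e_1),\ldots,\mu(a,e_{n+1},e_n);b\big).$$
   Context: Write $x\sim_s y$ if $d(x,y)\leqslant s$. A coarse median space is a triple $(X,d,\mu)$ with $(X,d)$ a metric space and $\mu\colon X^3\to X$ satisfying: (M1) $\mu(a,a,b)=a$; (M2) $\mu(a_1,a_2,a_3)$ is invariant under permutations of its arguments; (C1) there is an affine $\rho(t)=Kt+H_0$ with $d(\mu(a,b,c),\mu(a',b',c'))\leqslant\rho(d(a,a')+d(b,b')+d(c,c'))$ for all points; (C2) there is $H\colon\mathbb N\to[0,\infty)$ such that for every finite $A\subseteq X$ with $1\leqslant|A|\leqslant p$ there are a finite median algebra $(\Pi,\mu_\Pi)$ and maps $\pi\colon A\to\Pi$, $\lambda\colon\Pi\to X$ with $\lambda\mu_\Pi(x,y,z)\sim_{H(p)}\mu(\lambda x,\lambda y,\lambda z)$ for all $x,y,z\in\Pi$ and $\lambda\pi a\sim_{H(p)}a$ for all $a\in A$. Functions $\rho,H$ as in (C1),(C2) are called parameters. (A median algebra is a set with a ternary operation $m$ satisfying $m(a,a,b)=a$, full symmetry, and $m(m(a,b,c),b,d)=m(a,b,m(c,b,d))$.) The iterated coarse median is $\mu(x_1;b)=x_1$ and $\mu(x_1,\ldots,x_{k+1};b)=\mu(\mu(x_1,\ldots,x_k;b),x_{k+1},b)$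 for $k\geqslant1$. *)

(* Defs.v *)
From Stdlib Require Import Reals List.
Import ListNotations.
Open Scope R_scope.

Definition close {X : Type} (d : X -> X -> R) (s : R) (x y : X) : Prop := d x y <= s.

Definition is_metric {X : Type} (d : X -> X -> R) : Prop :=
  (forall x y, 0 <= d x y) /\
  (forall x y, d x y = 0 <-> x = y) /\
  (forall x y, d x y = d y x) /\
  (forall x y z, d x z <= d x y + d y z).

Definition is_median_algebra {P : Type} (m : P -> P -> P -> P) : Prop :=
  (forall a b, m a a b = a) /\
  (forall a b c, m a b c = m b a c /\ m a b c = m a c b) /\
  (forall a b c d, m (m a b c) b d = m a b (m c b d)).

Definition finite_type (P : Type) : Prop := exists l : list P, forall x, In x l.

(* Coarse median space with parameters rho(t) = K t + H0 and H. *)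
Definition coarse_median {X : Type} (d : X -> X -> R) (mu : X -> X -> X -> X)
  (K H0 : R) (H : nat -> R) : Prop :=
  is_metric d /\
  (forall a b, mu a a b = a) /\
  (* M2 : invariance under all permutations (generated by two transpositions) *)
  (forall a b c, mu a b c = mu b a c /\ mu a b c = mu a c b) /\
  (forall p, 0 <= H p) /\
  (forall a b c a' b' c',
      d (mu a b c) (mu a' b' c') <= K * (d a a' + d b b' + d c c') + H0) /\
  (* C2 : A a finite subset of X given by a duplicate-free list *)
  (forall (p : nat) (A : list X), NoDup A -> (1 <= length A <= p)%nat ->
     exists (P : Type) (m : P -> P -> P -> P) (pi : X -> P) (lam : P -> X),
       finite_type P /\ is_median_algebra m /\
       (forall x y z : P, close d (H p) (lam (m x y z)) (mu (lam x) (lam y) (lam z))) /\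
       (forall a, In a A -> close d (H p) (lam (pi a)) a)).

(* iter_mu0 mu b x k = mu(x 0, x 1, ..., x k ; b)  (k+1 arguments) *)
Fixpoint iter_mu0 {X : Type} (mu : X -> X -> X -> X) (b : X) (x : nat -> X) (k : nat) : X :=
  match k with
  | O => x O
  | S k' => mu (iter_mu0 mu b x k') (x (S k')) b
  end.

(* iterated coarse median mu(x_1,...,x_n ; b), with x_i := x (i-1); meaningful for n >= 1 *)
Definition iter_mu {X : Type} (mu : X -> X -> X -> X) (x : nat -> X) (n : nat) (b : X) : X :=
  iter_mu0 mu b x (n - 1).

(* Main.v *)
Require Import Defs.
From Stdlib Require Import Reals List Lra Lia Classical.
Import ListNotations.
Open Scope R_scope.

Lemma perm6 (X : Type) (m : X -> X -> X -> X) (Hm : is_median_algebra m) (a b c : X) :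
  m a b c = m a c b /\ m a b c = m b a c /\ m a b c = m b c a /\ m a b c = m c a b /\ m a b c = m c b a.
Proof.
  destruct Hm as [_ [HS _]].
  pose proof (HS a b c) as [h1 h2]. pose proof (HS b a c) as [h3 h4].
  pose proof (HS c a b) as [h5 h6]. pose proof (HS a c b) as [h7 h8].
  pose proof (HS b c a) as [h9 h10].
  repeat split; congruence.
Qed.

Lemma E0 (X : Type) (m : X -> X -> X -> X) (Hm : is_median_algebra m) (z0 x0 x1 : X) : (m x0 x0 x1) = x0.
Proof.
  pose proof Hm as [HM1 [HS HA]].
  pose proof (HM1 x0 x1).
  pose proof (perm6 X m Hm x0 x0 x1) as [? [? [? [? ?]]]].
  congruence.
Qed.

Lemma E1 (X : Type) (m : X -> X -> X -> X) (Hm : is_median_algebra m) (z0 x0 x1 x2 x3 : X) : (m x2 x3 (m x0 x1 x3)) = (m x0 x3 (m x1 x2 x3)).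
Proof.
  pose proof Hm as [HM1 [HS HA]].
  pose proof (HA x0 x3 x1 x2).
  pose proof (perm6 X m Hm (m x0 x3 x1) x3 x2) as [? [? [? [? ?]]]].
  pose proof (perm6 X m Hm x1 x2 x3) as [? [? [? [? ?]]]].
  pose proof (perm6 X m Hm x0 x1 x3) as [? [? [? [? ?]]]].
  pose proof (perm6 X m Hm x1 x3 x2) as [? [? [? [? ?]]]].
  pose proof (perm6 X m Hm x2 x3 (m x0 x1 x3)) as [? [? [? [? ?]]]].
  pose proof (perm6 X m Hm x0 x3 x1) as [? [? [? [? ?]]]].
  pose proof (perm6 X m Hm x0 x3 (m x1 x3 x2)) as [? [? [? [? ?]]]].
  pose proof (perm6 X m Hm x0 x3 (m x1 x2 x3)) as [? [? [? [? ?]]]].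
  congruence.
Qed.

Lemma E2 (X : Type) (m : X -> X -> X -> X) (Hm : is_median_algebra m) (z0 x0 x1 x2 : X) : (m x0 x1 (m x0 x1 x2)) = (m x0 x1 x2).
Proof.
  pose proof (E0 X m Hm z0 x0 x1) as I.
  revert I.
  pose proof (E1 X m Hm z0 x0 x0 x2 x1) as I.
  revert I.
  intros.
  pose proof (perm6 X m Hm x0 x2 x1) as [? [? [? [? ?]]]].
  pose proof (perm6 X m Hm x0 x0 x1) as [? [? [? [? ?]]]].
  pose proof (perm6 X m Hm x0 x1 (m x0 x1 x2)) as [? [? [? [? ?]]]].
  pose proof (perm6 X m Hm x0 x1 x2) as [? [? [? [? ?]]]].
  pose proof (perm6 X m Hm x2 x1 (m x0 x0 x1)) as [? [? [? [? ?]]]].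
  pose proof (perm6 X m Hm x0 x1 (m x0 x2 x1)) as [? [? [? [? ?]]]].
  congruence.
Qed.

Lemma E6 (X : Type) (m : X -> X -> X -> X) (Hm : is_median_algebra m) (z0 x0 x1 x2 x3 : X) : (m x0 (m x0 x1 x2) (m x0 x1 x3)) = (m x0 x2 (m x0 x1 x3)).
Proof.
  pose proof (E2 X m Hm z0 x1 x0 x3) as I.
  revert I.
  pose proof (E1 X m Hm z0 x1 (m x0 x1 x3) x2 x0) as I.
  revert I.
  pose proof (E1 X m Hm z0 (m x0 x1 x3) x2 x1 x0) as I.
  revert I.
  intros.
  pose proof (perm6 X m Hm x1 x0 (m x1 x0 x3)) as [? [? [? [? ?]]]].
  pose proof (perm6 X m Hm x0 x1 x3) as [? [? [? [? ?]]]].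
  pose proof (perm6 X m Hm x1 x0 (m (m x0 x1 x3) x2 x0)) as [? [? [? [? ?]]]].
  pose proof (perm6 X m Hm x0 x2 (m x0 x1 x3)) as [? [? [? [? ?]]]].
  pose proof (perm6 X m Hm x0 (m x0 x1 x2) (m x0 x1 x3)) as [? [? [? [? ?]]]].
  pose proof (perm6 X m Hm x2 x1 x0) as [? [? [? [? ?]]]].
  pose proof (perm6 X m Hm (m x0 x1 x3) x0 (m x2 x1 x0)) as [? [? [? [? ?]]]].
  pose proof (perm6 X m Hm x1 (m x0 x1 x3) x0) as [? [? [? [? ?]]]].
  pose proof (perm6 X m Hm (m x0 x1 x3) x2 x0) as [? [? [? [? ?]]]].
  pose proof (perm6 X m Hm x0 x1 x2) as [? [? [? [? ?]]]].
  pose proof (perm6 X m Hm x2 x0 (m x1 (m x0 x1 x3) x0)) as [? [? [? [? ?]]]].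
  pose proof (perm6 X m Hm x1 x0 x3) as [? [? [? [? ?]]]].
  congruence.
Qed.

Lemma E8 (X : Type) (m : X -> X -> X -> X) (Hm : is_median_algebra m) (z0 x0 x1 x2 x3 : X) : (m x0 (m x0 x1 x2) (m x1 x3 (m x0 x1 x2))) = (m x0 x1 x2).
Proof.
  pose proof (E2 X m Hm z0 x0 x1 x2) as I.
  revert I.
  pose proof (E1 X m Hm z0 x0 x1 x3 (m x0 x1 x2)) as I.
  revert I.
  pose proof (E0 X m Hm z0 (m x0 x1 x2) x3) as I.
  revert I.
  intros.
  pose proof (perm6 X m Hm x3 (m x0 x1 x2) (m x0 x1 (m x0 x1 x2))) as [? [? [? [? ?]]]].
  pose proof (perm6 X m Hm x1 x3 (m x0 x1 x2)) as [? [? [? [? ?]]]].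
  pose proof (perm6 X m Hm x0 (m x0 x1 x2) (m x1 x3 (m x0 x1 x2))) as [? [? [? [? ?]]]].
  pose proof (perm6 X m Hm (m x0 x1 x2) (m x0 x1 x2) x3) as [? [? [? [? ?]]]].
  pose proof (perm6 X m Hm x0 (m x0 x1 x2) (m x1 x3 (m x0 x1 x2))) as [? [? [? [? ?]]]].
  pose proof (perm6 X m Hm x0 x1 (m x0 x1 x2)) as [? [? [? [? ?]]]].
  pose proof (perm6 X m Hm x1 x3 (m x0 x1 x2)) as [? [? [? [? ?]]]].
  pose proof (perm6 X m Hm x0 x1 (m x0 x1 x2)) as [? [? [? [? ?]]]].
  pose proof (perm6 X m Hm x0 x1 x2) as [? [? [? [? ?]]]].
  pose proof (perm6 X m Hm x0 x1 x2) as [? [? [? [? ?]]]].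
  congruence.
Qed.

Lemma E9 (X : Type) (m : X -> X -> X -> X) (Hm : is_median_algebra m) (z0 x0 x1 x2 x3 : X) : (m x0 (m x0 x1 x2) (m x1 x2 x3)) = (m x0 x1 x2).
Proof.
  pose proof (E1 X m Hm z0 x0 x2 x3 x1) as I.
  revert I.
  pose proof (E8 X m Hm z0 x0 x1 x2 x3) as I.
  revert I.
  pose proof (E6 X m Hm z0 x0 x1 x2 (m x1 x2 x3)) as I.
  revert I.
  pose proof (E1 X m Hm z0 (m x1 x2 x3) x1 x2 x0) as I.
  revert I.
  intros.
  pose proof (perm6 X m Hm x1 x2 x3) as [? [? [? [? ?]]]].
  pose proof (perm6 X m Hm x0 x2 x1) as [? [? [? [? ?]]]].
  pose proof (perm6 X m Hm x0 (m x0 x1 x2) (m x1 x2 x3)) as [? [? [? [? ?]]]].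
  pose proof (perm6 X m Hm x1 x2 x0) as [? [? [? [? ?]]]].
  pose proof (perm6 X m Hm x0 (m x0 x1 x2) (m x0 x1 (m x1 x2 x3))) as [? [? [? [? ?]]]].
  pose proof (perm6 X m Hm x2 x3 x1) as [? [? [? [? ?]]]].
  pose proof (perm6 X m Hm x0 x1 (m x1 x2 x3)) as [? [? [? [? ?]]]].
  pose proof (perm6 X m Hm (m x1 x2 x3) x0 (m x1 x2 x0)) as [? [? [? [? ?]]]].
  pose proof (perm6 X m Hm x2 x0 (m (m x1 x2 x3) x1 x0)) as [? [? [? [? ?]]]].
  pose proof (perm6 X m Hm x3 x1 (m x0 x2 x1)) as [? [? [? [? ?]]]].
  pose proof (perm6 X m Hm x1 x3 (m x0 x1 x2)) as [? [? [? [? ?]]]].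
  pose proof (perm6 X m Hm x0 x2 (m x0 x1 (m x1 x2 x3))) as [? [? [? [? ?]]]].
  pose proof (perm6 X m Hm x0 (m x0 x1 x2) (m x1 x3 (m x0 x1 x2))) as [? [? [? [? ?]]]].
  pose proof (perm6 X m Hm x0 x1 x2) as [? [? [? [? ?]]]].
  pose proof (perm6 X m Hm x0 x1 (m x2 x3 x1)) as [? [? [? [? ?]]]].
  pose proof (perm6 X m Hm (m x1 x2 x3) x1 x0) as [? [? [? [? ?]]]].
  pose proof (perm6 X m Hm x0 x1 x2) as [? [? [? [? ?]]]].
  congruence.
Qed.



Lemma F3 (X : Type) (m : X -> X -> X -> X) (Hm : is_median_algebra m) (o x y z : X) :
  m o (m o x y) (m x y z) = m o x y.
Proof. exact (E9 X m Hm o o x y z). Qed.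

Lemma L2 (X : Type) (m : X -> X -> X -> X) (Hm : is_median_algebra m) (x y z : X) :
  m x y (m x y z) = m x y z.
Proof. exact (E2 X m Hm x x y z). Qed.

Lemma SL_trans (X : Type) (m : X -> X -> X -> X) (Hm : is_median_algebra m) (r s t u : X) :
  m s r t = s -> m t r u = t -> m s r u = s.
Proof.
  pose proof Hm as [HM1 [HS HA]]. intros h1 h2.
  rewrite <- h1 at 1. rewrite HA. rewrite h2. exact h1.
Qed.

Lemma SL_meet (X : Type) (m : X -> X -> X -> X) (Hm : is_median_algebra m) (r s t u : X) :
  m s r t = s -> m s r u = s -> m s r (m t r u) = s.
Proof.
  pose proof Hm as [HM1 [HS HA]]. intros h1 h2.
  rewrite <- HA. rewrite h1. exact h2.
Qed.

Lemma SL_lower (X : Type) (m : X -> X -> X -> X) (Hm : is_median_algebra m) (r s t : X) :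
  m (m s r t) r s = m s r t.
Proof.
  pose proof (perm6 X m Hm (m s r t) r s) as [? [? [? [? ?]]]].
  pose proof (L2 X m Hm s r t). congruence.
Qed.

Lemma SL_lower2 (X : Type) (m : X -> X -> X -> X) (Hm : is_median_algebra m) (r s t : X) :
  m (m s r t) r t = m s r t.
Proof.
  pose proof (perm6 X m Hm s r t) as [? [? [? [? ?]]]].
  pose proof (SL_lower X m Hm r t s). congruence.
Qed.

Lemma Mono (X : Type) (m : X -> X -> X -> X) (Hm : is_median_algebra m) (a e x y c : X) :
  m x y c = c -> m (m a e x) (m a e y) (m a e c) = m a e c.
Proof.
  intro hc.
  pose proof Hm as [HM1 [HS HA]].
  pose proof (F3 X m Hm x a e c) as h1.
  pose proof (F3 X m Hm y a e c) as h2.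
  pose proof (F3 X m Hm c a e x) as h3.
  pose proof (F3 X m Hm (m a e c) x y c) as h4. rewrite hc in h4.
  pose proof (perm6 X m Hm a e x) as [? [? [? [? ?]]]].
  pose proof (perm6 X m Hm a e y) as [? [? [? [? ?]]]].
  pose proof (perm6 X m Hm a e c) as [? [? [? [? ?]]]].
  remember (m a e x) as P eqn:hP. remember (m a e y) as Q eqn:hQ. remember (m a e c) as R eqn:hR.
  assert (e1 : m P R x = P).
  { pose proof (perm6 X m Hm x (m x a e) R) as [? [? [? [? ?]]]]. congruence. }
  assert (e2 : m Q R y = Q).
  { pose proof (perm6 X m Hm y (m y a e) R) as [? [? [? [? ?]]]]. congruence. }
  assert (e3 : m c R P = R).
  { pose proof (perm6 X m Hm c (m c a e) P) as [? [? [? [? ?]]]]. congruence. }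
  assert (e4 : m (m x R y) R c = m x R y).
  { pose proof (perm6 X m Hm R (m R x y) c) as [? [? [? [? ?]]]].
    pose proof (perm6 X m Hm R x y) as [? [? [? [? ?]]]]. congruence. }
  clear - Hm HM1 e1 e2 e3 e4.
  assert (wP : m (m P R Q) R P = m P R Q) by apply (SL_lower X m Hm).
  assert (wQ : m (m P R Q) R Q = m P R Q) by apply (SL_lower2 X m Hm).
  remember (m P R Q) as w eqn:hw.
  assert (wx : m w R x = w) by (apply (SL_trans X m Hm R w P x); assumption).
  assert (wy : m w R y = w) by (apply (SL_trans X m Hm R w Q y); assumption).
  assert (wxy : m w R (m x R y) = w) by (apply SL_meet; assumption).
  assert (wc : m w R c = w) by (apply (SL_trans X m Hm R w (m x R y) c); assumption).
  assert (wcP : m w R (m c R P) = w) by (apply SL_meet; assumption).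
  rewrite e3 in wcP.
  assert (wR : w = R).
  { pose proof (perm6 X m Hm w R R) as [? [? [? [? ?]]]]. pose proof (HM1 R w). congruence. }
  pose proof (perm6 X m Hm P R Q) as [? [? [? [? ?]]]]. congruence.
Qed.

Lemma Uniq (X : Type) (m : X -> X -> X -> X) (Hm : is_median_algebra m) (p q b t : X) :
  m p q t = t -> m q b t = t -> m p b t = t -> t = m p q b.
Proof.
  pose proof Hm as [HM1 [HS HA]]. intros h1 h2 h3.
  assert (k1 : m (m p q b) q t = t).
  { pose proof (HA p q b t) as hh.
    pose proof (perm6 X m Hm b q t) as [? [? [? [? ?]]]].
    pose proof (perm6 X m Hm p q t) as [? [? [? [? ?]]]].
    congruence. }
  assert (k2 : m (m p q b) p t = t).
  { pose proof (HA q p b t) as hh.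
    pose proof (perm6 X m Hm p q b) as [? [? [? [? ?]]]].
    pose proof (perm6 X m Hm b p t) as [? [? [? [? ?]]]].
    pose proof (perm6 X m Hm p q t) as [? [? [? [? ?]]]].
    congruence. }
  assert (sm : m p (m p q b) q = m p q b).
  { pose proof (L2 X m Hm p q b). pose proof (perm6 X m Hm p q (m p q b)) as [? [? [? [? ?]]]]. congruence. }
  clear h1 h2 h3.
  remember (m p q b) as s eqn:hs.
  assert (tq : m t s q = t) by (pose proof (perm6 X m Hm s q t) as [? [? [? [? ?]]]]; congruence).
  assert (tp : m t s p = t) by (pose proof (perm6 X m Hm s p t) as [? [? [? [? ?]]]]; congruence).
  assert (tpq : m t s (m p s q) = t) by (apply SL_meet; assumption).
  rewrite sm in tpq.
  pose proof (perm6 X m Hm t s s) as [? [? [? [? ?]]]]. pose proof (HM1 s t). congruence.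
Qed.

Lemma Distr (X : Type) (m : X -> X -> X -> X) (Hm : is_median_algebra m) (a e x y b : X) :
  m a e (m x y b) = m (m a e x) (m a e y) b.
Proof.
  pose proof Hm as [HM1 [HS HA]].
  assert (i1 : m (m a e x) (m a e y) (m a e (m x y b)) = m a e (m x y b)).
  { apply Mono; auto. apply L2; auto. }
  assert (i2 : m (m a e x) (m a e b) (m a e (m x y b)) = m a e (m x y b)).
  { apply Mono; auto. pose proof (L2 X m Hm x b y).
    pose proof (perm6 X m Hm x y b) as [? [? [? [? ?]]]].
    pose proof (perm6 X m Hm x b (m x b y)) as [? [? [? [? ?]]]]. congruence. }
  assert (i3 : m (m a e y) (m a e b) (m a e (m x y b)) = m a e (m x y b)).
  { apply Mono; auto. pose proof (L2 X m Hm y b x).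
    pose proof (perm6 X m Hm x y b) as [? [? [? [? ?]]]].
    pose proof (perm6 X m Hm y b x) as [? [? [? [? ?]]]].
    pose proof (perm6 X m Hm y b (m y b x)) as [? [? [? [? ?]]]]. congruence. }
  assert (g1 : m b (m a e b) (m a e x) = m a e b).
  { pose proof (F3 X m Hm b a e x) as hh.
    pose proof (perm6 X m Hm b a e) as [? [? [? [? ?]]]]. congruence. }
  assert (g2 : m b (m a e b) (m a e y) = m a e b).
  { pose proof (F3 X m Hm b a e y) as hh.
    pose proof (perm6 X m Hm b a e) as [? [? [? [? ?]]]]. congruence. }
  remember (m a e x) as P. remember (m a e y) as Q. remember (m a e (m x y b)) as R.
  remember (m a e b) as G.
  assert (j2 : m R P b = R).
  { apply (SL_trans X m Hm P R G b).
    - pose proof (perm6 X m Hm P G R) as [? [? [? [? ?]]]]. congruence.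
    - pose proof (perm6 X m Hm b G P) as [? [? [? [? ?]]]]. congruence. }
  assert (j3 : m R Q b = R).
  { apply (SL_trans X m Hm Q R G b).
    - pose proof (perm6 X m Hm Q G R) as [? [? [? [? ?]]]]. congruence.
    - pose proof (perm6 X m Hm b G Q) as [? [? [? [? ?]]]]. congruence. }
  apply Uniq; auto.
  - pose proof (perm6 X m Hm R Q b) as [? [? [? [? ?]]]]. congruence.
  - pose proof (perm6 X m Hm R P b) as [? [? [? [? ?]]]]. congruence.
Qed.

Lemma dedup (X : Type) (l : list X) :
  exists l', NoDup l' /\ (forall z, In z l -> In z l') /\ (length l' <= length l)%nat.
Proof.
  induction l as [|a l IH].
  - exists []. split; [constructor|]. split; [intros z []|]. simpl; auto.
  - destruct IH as [l' [h1 [h2 h3]]].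
    destruct (classic (In a l')) as [ha|ha].
    + exists l'. split; auto. split.
      * intros z [<-|hz]; auto.
      * simpl; auto.
    + exists (a :: l'). split; [constructor; auto|]. split.
      * intros z [<-|hz]; [left; auto| right; auto].
      * simpl. apply le_n_S; auto.
Qed.

Lemma approx (X P : Type) (d : X -> X -> R) (mu : X -> X -> X -> X) (K H0 h : R)
  (m : P -> P -> P -> P) (lam : P -> X)
  (Hsym : forall x y, d x y = d y x)
  (Htri : forall x y z, d x z <= d x y + d y z)
  (Hpos : forall x y, 0 <= d x y)
  (HC1 : forall a b c a' b' c',
      d (mu a b c) (mu a' b' c') <= K * (d a a' + d b b' + d c c') + H0)
  (Hlam : forall x y z : P, close d h (lam (m x y z)) (mu (lam x) (lam y) (lam z)))
  (u v w : X) (u' v' w' : P) (D1 D2 D3 : R) :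
  d u (lam u') <= D1 -> d v (lam v') <= D2 -> d w (lam w') <= D3 ->
  d (mu u v w) (lam (m u' v' w')) <= Rabs K * (D1 + D2 + D3) + H0 + h.
Proof.
  intros h1 h2 h3.
  pose proof (Htri (mu u v w) (mu (lam u') (lam v') (lam w')) (lam (m u' v' w'))) as t.
  pose proof (HC1 u v w (lam u') (lam v') (lam w')) as c1.
  pose proof (Hlam u' v' w') as c2. unfold close in c2. rewrite Hsym in c2.
  pose proof (Hpos u (lam u')). pose proof (Hpos v (lam v')). pose proof (Hpos w (lam w')).
  set (s := d u (lam u') + d v (lam v') + d w (lam w')) in *.
  assert (K * s <= Rabs K * (D1 + D2 + D3)).
  { apply Rle_trans with (Rabs K * s).
    - apply Rmult_le_compat_r; [unfold s; lra| apply Rle_abs].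
    - apply Rmult_le_compat_l; [apply Rabs_pos| unfold s; lra]. }
  lra.
Qed.

Definition C0 (K H0 h : R) : R :=
  let D1 := Rabs K * (h + h + h) + H0 + h in
  (Rabs K * (h + h + D1) + H0 + h) + (Rabs K * (D1 + D1 + h) + H0 + h).

Lemma base (X : Type) (d : X -> X -> R) (mu : X -> X -> X -> X) (K H0 : R) (H : nat -> R) :
  coarse_median d mu K H0 H ->
  forall a e x y b, d (mu a e (mu x y b)) (mu (mu a e x) (mu a e y) b) <= C0 K H0 (H 5%nat).
Proof.
  intros [[Hpos [Hzero [Hsym Htri]]] [HM1 [HS [HH [HC1 HC2]]]]] a e x y b.
  destruct (dedup X [a; e; x; y; b]) as [A [hnd [hin hlen]]].
  assert (hl : (1 <= length A <= 5)%nat).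
  { split.
    - destruct A as [|z A]. + exfalso. apply (hin a). simpl; auto. + simpl. apply le_n_S, le_0_n.
    - exact hlen. }
  destruct (HC2 5%nat A hnd hl) as [P [m [pi [lam [hfin [hma [hlam hpi]]]]]]].
  set (h := H 5%nat).
  assert (leaf : forall z, In z [a; e; x; y; b] -> d z (lam (pi z)) <= h).
  { intros z hz. pose proof (hpi z (hin z hz)) as q. unfold close in q. rewrite Hsym. exact q. }
  assert (la : d a (lam (pi a)) <= h) by (apply leaf; simpl; auto).
  assert (le : d e (lam (pi e)) <= h) by (apply leaf; simpl; auto).
  assert (lx : d x (lam (pi x)) <= h) by (apply leaf; simpl; auto 6).
  assert (ly : d y (lam (pi y)) <= h) by (apply leaf; simpl; auto 6).
  assert (lb : d b (lam (pi b)) <= h) by (apply leaf; simpl; auto 6).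
  pose proof (approx X P d mu K H0 h m lam Hsym Htri Hpos HC1 hlam) as ap.
  pose proof (ap _ _ _ _ _ _ _ _ _ lx ly lb) as dxyb.
  pose proof (ap _ _ _ _ _ _ _ _ _ la le lx) as daex.
  pose proof (ap _ _ _ _ _ _ _ _ _ la le ly) as daey.
  pose proof (ap _ _ _ _ _ _ _ _ _ la le dxyb) as L.
  pose proof (ap _ _ _ _ _ _ _ _ _ daex daey lb) as R.
  rewrite <- (Distr P m hma) in R.
  pose proof (Htri (mu a e (mu x y b)) (lam (m (pi a) (pi e) (m (pi x) (pi y) (pi b))))
                   (mu (mu a e x) (mu a e y) b)) as t.
  rewrite (Hsym (lam _) (mu (mu a e x) (mu a e y) b)) in t.
  unfold C0. fold h. lra.
Qed.

Fixpoint Cs (K H0 c0 : R) (k : nat) : R :=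
  match k with
  | O => 0
  | S k' => c0 + Rabs K * Cs K H0 c0 k' + Rabs H0
  end.

Theorem lemma2p18 (K H0 : R) (H : nat -> R) (n : nat) (hn : (1 <= n)%nat) :
  exists C : R,
    forall (X : Type) (d : X -> X -> R) (mu : X -> X -> X -> X),
      coarse_median d mu K H0 H ->
      forall (a b : X) (e : nat -> X),
        close d C
          (mu a (e n) (iter_mu mu e n b))
          (iter_mu mu (fun i => mu a (e n) (e i)) n b).
Proof.
  exists (Cs K H0 (C0 K H0 (H 5%nat)) (n - 1)).
  intros X d mu hcm a b e.
  pose proof (base X d mu K H0 H hcm) as hb.
  destruct hcm as [[Hpos [Hzero [Hsym Htri]]] [HM1 [HS [HH [HC1 HC2]]]]].
  assert (d0 : forall z, d z z = 0) by (intro z; apply Hzero; reflexivity).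
  unfold close, iter_mu.
  generalize (n - 1)%nat as k. intro k.
  induction k as [|k IH]; simpl.
  - rewrite d0. lra.
  - set (I := iter_mu0 mu b e k) in *.
    set (J := iter_mu0 mu b (fun i => mu a (e n) (e i)) k) in *.
    pose proof (hb a (e n) I (e (S k)) b) as h1.
    pose proof (HC1 (mu a (e n) I) (mu a (e n) (e (S k))) b J (mu a (e n) (e (S k))) b) as h2.
    rewrite !d0 in h2.
    pose proof (Htri (mu a (e n) (mu I (e (S k)) b))
                     (mu (mu a (e n) I) (mu a (e n) (e (S k))) b)
                     (mu J (mu a (e n) (e (S k))) b)) as t.
    pose proof (Hpos (mu a (e n) I) J).
    assert (K * d (mu a (e n) I) J <= Rabs K * Cs K H0 (C0 K H0 (H 5%nat)) k).
    { apply Rle_trans with (Rabs K * d (mu a (e n) I) J).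
      - apply Rmult_le_compat_r; [lra| apply Rle_abs].
      - apply Rmult_le_compat_l; [apply Rabs_pos| exact IH]. }
    pose proof (Rle_abs H0).
    lra.
Qed.
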